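(* Let $d,k$ be integers with $2\leq d\leq\frac{k+1}{2}$, $\Sigma_k=\{\sigma_1,\ldots,\sigma_k\}$, $\Sigma_d=\{\sigma_1,\ldots,\sigma_d\}$, $n\geq1$, and let $\mathcal{G}\subseteq\Sigma_k^n$. Put $\mathcal{G}'=\mathcal{G}\cap\Sigma_d^n$ and $\mathcal{G}''=\{f(g_1)f(g_2)\cdots f(g_n)\mid g=g_1\cdots g_n\in\mathcal{G}\}$, where $f:\Sigma_k\to\Sigma_k$ is $f(\sigma_i)=\sigma_{\max\{i,d\}}$. Suppose $\mathcal{G}$ is closed under replacing $\sigma_i$ by $\sigma_j$ for any $i>d$ and $j\in[k]$, i.e. whenever $g\in\mathcal{G}$ has the letter $\sigma_i$ with $i>d$ in some coordinate, the word obtained by changing that coordinate to any letter of $\Sigma_k$ also lies in $\mathcal{G}$. Then either $|\mathcal{G}'|=|\mathcal{G}''|=0$ or $\log_{k-d+1}|\mathcal{G}''|\leq\log_d|\mathcal{G}'|$. *)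

(* Defs.v *)
From mathcomp Require Import all_boot.
From Stdlib Require Import Reals.
Set Implicit Arguments. Unset Strict Implicit. Unset Printing Implicit Defensive.

(* Alphabet Sigma_k = {sigma_1,...,sigma_k} is encoded as 'I_k, with
   sigma_i  <->  the ordinal of value i-1.  Words of length n are
   finite functions 'I_n -> 'I_k. *)
Definition word (n k : nat) := {ffun 'I_n -> 'I_k}.

Definition in_Sigma_d (n k d : nat) (g : word n k) : bool :=
  [forall p : 'I_n, (g p : nat) < d].

Definition Gprime (n k d : nat) (G : {set word n k}) : {set word n k} :=
  [set g in G | in_Sigma_d d g].

(* f(sigma_i) = sigma_{max(i,d)}; 0-indexed: j |-> max(j, d-1).
   (insubd only falls back to j when d > k, excluded by the hypotheses.) *)
Definition fletter (k d : nat) (j : 'I_k) : 'I_k := insubd j (maxn j d.-1).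

Definition fword (n k d : nat) (g : word n k) : word n k :=
  [ffun p => fletter d (g p)].

Definition Gsecond (n k d : nat) (G : {set word n k}) : {set word n k} :=
  [set fword d g | g in G].

Definition replace_at (n k : nat) (g : word n k) (p : 'I_n) (j : 'I_k)
  : word n k := [ffun q => if q == p then j else g q].

Definition closed_repl (n k d : nat) (G : {set word n k}) : Prop :=
  forall g, g \in G -> forall (p : 'I_n), d <= (g p : nat) ->
    forall j : 'I_k, replace_at g p j \in G.

Definition logb (b x : R) : R := (ln x / ln b)%R.

(* Main.v *)
Require Import Defs.
From mathcomp Require Import all_boot zify.
From Stdlib Require Import Lia.
Set Implicit Arguments. Unset Strict Implicit. Unset Printing Implicit Defensive.
From Stdlib Require Import Reals Lra.
Module An.
Unset Implicit Arguments.
Local Open Scope R_scope.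
Lemma dshift (p c t : R) : 0 < t + c ->
  derivable_pt_lim (fun x => Rpower (x + c) p) t (p * Rpower (t + c) (p - 1)).
Proof.
move=> ht.
  have h := derivable_pt_lim_comp (fun x => x + c) (fun x => Rpower x p) t 1
     (p * Rpower (t + c) (p - 1)).
  replace (p * Rpower (t + c) (p - 1)) with (p * Rpower (t + c) (p - 1) * 1) by ring.
  apply h.
  + replace 1 with (1 + 0) by ring. apply derivable_pt_lim_plus.
    apply derivable_pt_lim_id. apply derivable_pt_lim_const.
  + apply derivable_pt_lim_power. lra.
Qed.

Lemma der_pw (p c t : R) : 0 <= c -> 0 < t ->
  derivable_pt_lim (fun x => Rpower (x + c) p - Rpower x p) t
    (p * Rpower (t + c) (p - 1) - p * Rpower t (p - 1)).
Proof.
move=> hc ht.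
apply: (derivable_pt_lim_minus (fun x => Rpower (x + c) p) (fun x => Rpower x p)).
- apply dshift. lra.
- apply derivable_pt_lim_power. lra.
Qed.

Lemma incr_lem (p c u : R) : 1 <= p -> 0 <= c -> 1 <= u ->
  Rpower (1 + c) p - Rpower 1 p <= Rpower (u + c) p - Rpower u p.
Proof.
move=> hp hc hu.
have [->|hu'] : u = 1 \/ 1 < u by lra.
  lra.
have [xi [Heq hxi]] := MVT_cor2 (fun x => Rpower (x + c) p - Rpower x p)
  (fun t => p * Rpower (t + c) (p - 1) - p * Rpower t (p - 1)) 1 u hu'
  (fun x hx => der_pw p c x hc ltac:(lra)).
simpl in Heq.
have : Rpower xi (p - 1) <= Rpower (xi + c) (p - 1).
  apply Rle_Rpower_l; lra.
move=> h.
have : 0 <= (p * Rpower (xi + c) (p - 1) - p * Rpower xi (p - 1)) * (u - 1).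
  apply Rmult_le_pos; [|lra]. nra.
lra.
Qed.

Definition pw (p x : R) : R := match Rle_dec x 0 with left _ => 0 | right _ => Rpower x p end.

Lemma Rpower1 p : Rpower 1 p = 1.
Proof. by rewrite /Rpower ln_1 Rmult_0_r exp_0. Qed.

Lemma pw_ge0 p x : 0 <= pw p x.
Proof. rewrite /pw; case: Rle_dec => _; [lra|]. rewrite /Rpower. apply Rlt_le, exp_pos. Qed.

Lemma pw_mono p a b : 0 <= p -> a <= b -> pw p a <= pw p b.
Proof.
move=> hp hab. rewrite /pw; case: Rle_dec => ha.
  apply (pw_ge0 p b).
case: Rle_dec => hb; first lra.
apply Rle_Rpower_l; lra.
Qed.

Lemma pw0 p : pw p 0 = 0.
Proof. rewrite /pw; case: Rle_dec => //; lra. Qed.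

Lemma pw_pos p x : 0 < x -> pw p x = Rpower x p.
Proof. rewrite /pw; case: Rle_dec => //; lra. Qed.

Lemma key (p c b0 b1 : R) : 1 <= p -> 0 <= c -> 0 <= b1 -> b1 <= b0 ->
  pw p b0 + (Rpower (1 + c) p - 1) * pw p b1 <= pw p (b0 + c * b1).
Proof.
move=> hp hc hb1 hb.
have [->|hb1'] : b1 = 0 \/ 0 < b1 by lra.
  replace (b0 + c * 0) with b0 by ring. rewrite pw0; lra.
rewrite !pw_pos; try nra.
have hu : 1 <= b0 / b1.
  apply (Rmult_le_reg_r b1); first lra.
  replace (b0 / b1 * b1) with b0 by (field; lra). lra.
have := incr_lem _ _ _ hp hc hu. rewrite Rpower1 => h.
have e0 : b0 = b1 * (b0 / b1) by field; lra.
have e1 : b0 + c * b1 = b1 * (b0 / b1 + c) by field; lra.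
set u := b0 / b1 in hu h e0 e1 *.
rewrite {1}e0 e1 -(Rpower_mult_distr b1 u) ; try lra.
rewrite -(Rpower_mult_distr b1 (u + c)); try lra.
have : 0 < Rpower b1 p by apply exp_pos.
nra.
Qed.
End An.
Import An.

Definition wcons n k (j : 'I_k) (w : word n k) : word n.+1 k :=
  [ffun i : 'I_n.+1 => if unlift ord0 i is Some i' then w i' else j].
Definition wtl n k (g : word n.+1 k) : word n k := [ffun i => g (lift ord0 i)].

Lemma wcons0 n k j (w : word n k) : wcons j w ord0 = j.
Proof. by rewrite ffunE unlift_none. Qed.
Lemma wconsS n k j (w : word n k) i : wcons j w (lift ord0 i) = w i.
Proof. by rewrite ffunE liftK. Qed.
Lemma wtlK n k j (w : word n k) : wtl (wcons j w) = w.
Proof. by apply/ffunP=> i; rewrite ffunE wconsS. Qed.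
Lemma wconsE n k (g : word n.+1 k) : wcons (g ord0) (wtl g) = g.
Proof.
apply/ffunP=> i; rewrite ffunE; case: unliftP => [i' ->|->] //.
by rewrite ffunE.
Qed.
Lemma wcons_inj n k j : injective (@wcons n k j).
Proof. by move=> w1 w2 /(congr1 (@wtl n k)); rewrite !wtlK. Qed.

Definition slice n k (A : {set word n.+1 k}) (j : 'I_k) : {set word n k} :=
  [set w | wcons j w \in A].

Lemma card_slice n k (A : {set word n.+1 k}) :
  #|A| = \sum_(j < k) #|slice A j|.
Proof.
rewrite -sum1_card (@partition_big _ _ _ _ _ _ (fun g => g \in A) (fun g : word n.+1 k => g ord0) predT) //=.
apply: eq_bigr => j _.
rewrite sum1dep_card.
have -> : [set x | (x \in A) && (x ord0 == j)] = wcons j @: slice A j.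
  apply/setP=> g; rewrite inE; apply/andP/imsetP.
    move=> [gA /eqP gj]; exists (wtl g); rewrite ?inE -gj wconsE //.
  by move=> [w]; rewrite inE => wA ->; rewrite wcons0 eqxx.
by rewrite card_imset //; apply: wcons_inj.
Qed.

Lemma card_bigcup_le (T I : finType) (P : pred I) (A : I -> {set T}) :
  #|\bigcup_(j | P j) A j| <= \sum_(j | P j) #|A j|.
Proof.
apply: (big_ind2 (fun (X : {set T}) (n : nat) => is_true (#|X| <= n))); first by rewrite cards0.
  move=> X1 n1 X2 n2 h1 h2; apply: leq_trans (leq_card_setU _ _) _.
  exact: leq_add.
by [].
Qed.

Lemma union_bound (T I : finType) (P : pred I) (A : I -> {set T}) (B : {set T}) :
  (forall j, P j -> B \subset A j) -> (exists j, P j) ->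
  #|\bigcup_(j | P j) A j| + (#|P| - 1) * #|B| <= \sum_(j | P j) #|A j|.
Proof.
move=> hB [j0 Pj0].
have h1 : \bigcup_(j | P j) A j \subset B :|: \bigcup_(j | P j) (A j :\: B).
  apply/subsetP=> x /bigcupP[j Pj xA]; rewrite inE.
  case xB: (x \in B) => //=; apply/bigcupP; exists j => //.
  by rewrite inE xB.
have h2 := subset_leq_card h1.
have h3 := leq_card_setU B (\bigcup_(j | P j) (A j :\: B)).
have h4 := card_bigcup_le P (fun j => A j :\: B).
have h5 : \sum_(j | P j) #|A j| = \sum_(j | P j) #|A j :\: B| + #|P| * #|B|.
  rewrite -sum_nat_const -big_split /=; apply: eq_bigr => j Pj.
  by rewrite cardsD (setIidPr (hB j Pj)) subnK // subset_leq_card // hB.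
have hP : 0 < #|P| by apply/card_gt0P; exists j0.
rewrite h5.
move: h2 h3 h4 hP; set u := #|_ :|: _|; set v := \sum_(_ | _) _.
move=> h2 h3 h4 hP.
have : #|\bigcup_(j | P j) A j| <= #|B| + v by apply: leq_trans h2 (leq_trans h3 _); rewrite leq_add2l.
rewrite mulnBl mul1n; move: (#|P|) hP => q hq; move: (#|B|) => b.
move=> h; rewrite addnBA; last by rewrite leq_pmull.
rewrite leq_subLR; move: h; set x := #|_|; move=> h; lia.
Qed.

Lemma fletterE k d (j : 'I_k) : d <= k -> (fletter d j : nat) = maxn j d.-1.
Proof.
move=> hdk; rewrite /fletter val_insubd; case: ifP => // /negbT.
have := ltn_ord j; lia.
Qed.

Lemma fword_cons n k d j (w : word n k) :
  fword d (wcons j w) = wcons (fletter d j) (fword d w).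
Proof.
apply/ffunP=> i; rewrite ffunE; case: (unliftP ord0 i) => [i' ->|->].
  by rewrite !wconsS ffunE.
by rewrite !wcons0.
Qed.

Lemma inSd_cons n k d j (w : word n k) :
  in_Sigma_d d (wcons j w) = (j < d) && in_Sigma_d d w.
Proof.
apply/forallP/andP => [h|[hj /forallP h] i].
  split; first by have := h ord0; rewrite wcons0.
  by apply/forallP=> i; have := h (lift ord0 i); rewrite wconsS.
by case: (unliftP ord0 i) => [i' ->|->]; rewrite ?wconsS ?wcons0.
Qed.

Lemma slice_prime n k d (G : {set word n.+1 k}) j :
  slice (Gprime d G) j = if j < d then Gprime d (slice G j) else set0.
Proof.
apply/setP=> w; rewrite !inE inSd_cons.
by case: ifP => hj; rewrite !inE //= andbF.
Qed.

Lemma card_prime n k d (G : {set word n.+1 k}) :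
  #|Gprime d G| = \sum_(j < k | j < d) #|Gprime d (slice G j)|.
Proof.
rewrite card_slice [RHS]big_mkcond /=; apply: eq_bigr => j _.
by rewrite slice_prime; case: ifP; rewrite ?cards0.
Qed.

Lemma rep_consS n k j (w : word n k) p j' :
  replace_at (wcons j w) (lift ord0 p) j' = wcons j (replace_at w p j').
Proof.
apply/ffunP=> i; rewrite ffunE; case: (unliftP ord0 i) => [i' ->|->].
  by rewrite (inj_eq (@lift_inj _ ord0)) !wconsS ffunE.
by rewrite (negbTE (neq_lift _ _)) !wcons0.
Qed.

Lemma rep_cons0 n k j (w : word n k) j' :
  replace_at (wcons j w) ord0 j' = wcons j' w.
Proof.
apply/ffunP=> i; rewrite ffunE; case: (unliftP ord0 i) => [i' ->|->].
  by rewrite eq_sym (negbTE (neq_lift _ _)) !wconsS.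
by rewrite eqxx wcons0.
Qed.

Lemma closed_slice n k d (G : {set word n.+1 k}) j :
  closed_repl d G -> closed_repl d (slice G j).
Proof.
move=> hG w; rewrite inE => wG p hp j'.
by rewrite inE -rep_consS; apply: hG => //; rewrite wconsS.
Qed.

Lemma closed_union n k d (I : finType) (P : pred I) (F : I -> {set word n k}) :
  (forall j, P j -> closed_repl d (F j)) -> closed_repl d (\bigcup_(j | P j) F j).
Proof.
move=> hF g /bigcupP[j Pj gF] p hp j'.
by apply/bigcupP; exists j => //; apply: hF.
Qed.

Lemma slice_free n k d (G : {set word n.+1 k}) (j i : 'I_k) :
  closed_repl d G -> d <= j -> slice G j \subset slice G i.
Proof.
move=> hG hj; apply/subsetP=> w; rewrite !inE => wG.
by rewrite -(rep_cons0 j); apply: hG => //; rewrite wcons0.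
Qed.

Lemma slice_second n k d (G : {set word n.+1 k}) j w :
  (w \in slice (Gsecond d G) j) =
  [exists i, (fletter d i == j) && (w \in Gsecond d (slice G i))].
Proof.
rewrite inE; apply/imsetP/existsP.
  move=> [g gG]; rewrite -(wconsE g) fword_cons => e.
  exists (g ord0); have := congr1 (fun x : word n.+1 k => x ord0) e; rewrite !wcons0 => ->.
  rewrite eqxx /=; apply/imsetP; exists (wtl g); first by rewrite inE wconsE.
  by have := congr1 (@wtl _ _) e; rewrite !wtlK.
move=> [i /andP[/eqP <- /imsetP[u]]]; rewrite inE => uG ->.
by exists (wcons i u) => //; rewrite fword_cons.
Qed.

Lemma card_lt k d : d <= k -> #|[set j : 'I_k | j < d]| = d.
Proof.
move=> hdk.
have -> : [set j : 'I_k | j < d] = [set widen_ord hdk i | i in 'I_d].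
  apply/setP=> j; rewrite inE; apply/idP/imsetP => [hj|[i _ ->]] //=.
  by exists (Ordinal hj) => //; apply: val_inj.
by rewrite card_imset ?card_ord // => x y /(congr1 val) /= e; apply: val_inj.
Qed.

Lemma card_ge k d : d <= k -> #|[set j : 'I_k | d <= j]| = k - d.
Proof.
move=> hdk.
have -> : [set j : 'I_k | d <= j] = ~: [set j : 'I_k | j < d].
  by apply/setP=> j; rewrite !inE leqNgt.
by rewrite cardsCs setCK card_lt // card_ord.
Qed.


Lemma second_bound n k d (G : {set word n.+1 k}) (hd : 0 < d) (hdk : d < k) :
  closed_repl d G ->
  #|Gsecond d G| <=
    #|Gsecond d (\bigcup_(i : 'I_k | i < d) slice G i)| +
    (k - d) * #|Gsecond d (slice G (Ordinal hdk))|.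
Proof.
move=> hG.
set U := \bigcup_(i : 'I_k | i < d) slice G i.
set H := slice G (Ordinal hdk).
have hd1 : d.-1 < k by lia.
set jd1 : 'I_k := Ordinal hd1.
have hdk' : d <= k by lia.
have step : forall j : 'I_k, #|slice (Gsecond d G) j| <=
    (if j == jd1 then #|Gsecond d U| else 0) + (if d <= j then #|Gsecond d H| else 0).
  move=> j.
  case: (ltngtP j d.-1) => hj.
  - rewrite (_ : slice _ _ = set0) ?cards0 //.
    apply/setP=> w; rewrite slice_second inE; apply/existsP => -[i /andP[/eqP e _]].
    move: e => /(congr1 val); rewrite /= fletterE //; lia.
  - have hj' : d <= j by lia.
    have -> : (j == jd1) = false by apply/negbTE; apply/eqP => /(congr1 val) /=; lia.
    rewrite hj' add0n.
    rewrite (_ : slice _ _ = Gsecond d H) // /H.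
    have -> : slice G (Ordinal hdk) = slice G j.
      by apply/eqP; rewrite eqEsubset !(slice_free (d:=d)) //=.
    apply/setP=> w; rewrite slice_second; apply/existsP/idP.
      move=> [i /andP[/eqP e]]; have : i = j.
        apply: val_inj; move: e => /(congr1 val); rewrite /= fletterE //; lia.
      by move=> ->.
    by move=> h; exists j; rewrite h andbT; apply/eqP/val_inj; rewrite /= fletterE //; lia.
  - have -> : j = jd1 by apply: val_inj.
    rewrite eqxx /= (_ : d <= d.-1 = false) ?addn0; last by lia.
    rewrite (_ : slice _ _ = Gsecond d U) //.
    apply/setP=> w; rewrite slice_second; apply/existsP/imsetP.
      move=> [i /andP[/eqP e /imsetP[u uS ->]]]; exists u => //.
      apply/bigcupP; exists i => //.
      by move: e => /(congr1 val); rewrite /= fletterE //; lia.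
    move=> [u /bigcupP[i hi uS] ->]; exists i; apply/andP; split.
      by apply/eqP/val_inj; rewrite /= fletterE //; lia.
    by apply/imsetP; exists u.
rewrite card_slice.
apply: leq_trans.
  apply: leq_sum => j _; exact: step.
rewrite big_split /= -!big_mkcond /= big_pred1_eq leq_add2l.
rewrite -(card_ge hdk') -sum_nat_const; apply/eq_leq/eq_bigl => j; rewrite inE.
by [].
Qed.

Lemma Gprime_sub n k d (A B : {set word n k}) : A \subset B -> Gprime d A \subset Gprime d B.
Proof. move=> /subsetP h; apply/subsetP=> w; rewrite !inE => /andP[/h -> ->]. by []. Qed.

Lemma prime_bound n k d (G : {set word n.+1 k}) (hd : 0 < d) (hdk : d < k) :
  closed_repl d G ->
  #|Gprime d (\bigcup_(i : 'I_k | i < d) slice G i)| +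
    (d - 1) * #|Gprime d (slice G (Ordinal hdk))| <= #|Gprime d G|.
Proof.
move=> hG.
have hdk' : d <= k by lia.
have -> : Gprime d (\bigcup_(i : 'I_k | i < d) slice G i) =
          \bigcup_(i : 'I_k | i < d) Gprime d (slice G i).
  apply/setP=> w; rewrite inE; apply/andP/bigcupP.
    by move=> [/bigcupP[i hi wi] hw]; exists i => //; rewrite inE wi.
  by move=> [i hi]; rewrite inE => /andP[wi ->]; split => //; apply/bigcupP; exists i.
rewrite card_prime.
have := @union_bound _ _ (fun j : 'I_k => j < d) (fun j => Gprime d (slice G j))
   (Gprime d (slice G (Ordinal hdk))).
have hP : #|(fun j : 'I_k => j < d)| = d.
  by rewrite -[RHS](card_lt hdk'); apply: eq_card => j; rewrite inE.
rewrite hP; apply.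
  by move=> j hj; apply: Gprime_sub; apply: (slice_free (d:=d)).
have h0 : 0 < k by lia.
by exists (Ordinal h0).
Qed.

Lemma H_sub_U n k d (G : {set word n.+1 k}) (hd : 0 < d) (hdk : d < k) :
  closed_repl d G ->
  slice G (Ordinal hdk) \subset \bigcup_(i : 'I_k | i < d) slice G i.
Proof.
move=> hG; have h0 : 0 < k by lia.
apply: subset_trans (@slice_free n k d G (Ordinal hdk) (Ordinal h0) hG _) _ => //.
by apply: (bigcup_sup (Ordinal h0)).
Qed.

Lemma INR_addn a b : INR (a + b) = (INR a + INR b)%R.
Proof. by rewrite -plus_INR. Qed.
Lemma INR_muln a b : INR (a * b) = (INR a * INR b)%R.
Proof. by rewrite -mult_INR. Qed.
Lemma INR_leq a b : a <= b -> (INR a <= INR b)%R.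
Proof. by move=> /leP; apply: le_INR. Qed.

Lemma base_case k d p (G : {set word 0 k}) :
  (INR #|Gsecond d G| <= pw p (INR #|Gprime d G|))%R.
Proof.
have hG : #|G| <= 1.
  apply: leq_trans (max_card _) _; by rewrite card_ffun !card_ord expn0.
have -> : Gprime d G = G.
  apply/setP=> w; rewrite inE; have -> : in_Sigma_d d w by apply/forallP => -[]. by rewrite andbT.
have h2 : #|Gsecond d G| <= #|G| by apply: leq_imset_card.
case: (#|G|) hG h2 => [|[|//]] _ h2.
  have -> : #|Gsecond d G| = 0 by lia.
  rewrite pw0 /=; lra.
rewrite pw_pos /=; last lra.
rewrite Rpower1; have := INR_leq h2; rewrite /=; lra.
Qed.

Lemma main k d p (hd : 2 <= d) (hdk : d < k) (hp : (1 <= p)%R)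
  (hm : Rpower (INR d) p = INR (k - d + 1)) n :
  forall G : {set word n k}, closed_repl d G ->
  (INR #|Gsecond d G| <= pw p (INR #|Gprime d G|))%R.
Proof.
elim: n => [|n IH] G hG; first exact: base_case.
have hd0 : 0 < d by lia.
set U := \bigcup_(i : 'I_k | i < d) slice G i.
set H := slice G (Ordinal hdk).
have hU : closed_repl d U by apply: closed_union => j _; apply: closed_slice.
have hH : closed_repl d H by apply: closed_slice.
have IU := IH U hU. have IHH := IH H hH.
have s2 := INR_leq (second_bound hd0 hdk hG).
have s1 := INR_leq (prime_bound hd0 hdk hG).
have b10 := INR_leq (subset_leq_card (Gprime_sub d (H_sub_U hd0 hdk hG))).
rewrite -/U -/H in s1 s2 b10.
rewrite INR_addn INR_muln in s1 s2.
have hkd : INR (k - d) = (Rpower (1 + (INR d - 1)) p - 1)%R.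
  rewrite (_ : 1 + (INR d - 1) = INR d)%R; last ring.
  rewrite hm (_ : k - d + 1 = (k - d).+1) ?S_INR; [ring|lia].
have hd1 : INR (d - 1) = (INR d - 1)%R.
  rewrite minus_INR; [by []|apply/leP; lia].
rewrite INR_addn INR_muln in s2.
rewrite hkd in s2; rewrite hd1 in s1.
have hc : (0 <= INR d - 1)%R.
  have := INR_leq hd0; rewrite /=; lra.
have hK := key p (INR d - 1) (INR #|Gprime d U|) (INR #|Gprime d H|) hp hc (pos_INR _) b10.
have hmon := pw_mono p _ _ ltac:(lra) s1.
have hge : (0 <= Rpower (1 + (INR d - 1)) p - 1)%R by rewrite -hkd; apply: pos_INR.
have := Rmult_le_compat_l _ _ _ hge IHH.
lra.
Qed.

Lemma ln_le' (x y : R) : (0 < x)%R -> (x <= y)%R -> (ln x <= ln y)%R.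
Proof.
move=> hx hxy; case: (Rle_lt_or_eq_dec _ _ hxy) => h.
  by apply: Rlt_le; apply: ln_increasing.
by rewrite h; apply: Rle_refl.
Qed.

Lemma ln_pos' (x : R) : (1 < x)%R -> (0 < ln x)%R.
Proof. by move=> h; rewrite -ln_1; apply: ln_increasing => //; lra. Qed.

Theorem lemma12 (d k n : nat) (G : {set word n k}) :
  (2 <= d)%N -> (2 * d <= k + 1)%N -> (1 <= n)%N ->
  closed_repl d G ->
  (#|Gprime d G| = 0%N /\ #|Gsecond d G| = 0%N) \/
  (logb (INR (k - d + 1)) (INR #|Gsecond d G|)
     <= logb (INR d) (INR #|Gprime d G|))%R.
Proof.
move=> hd hdk _ hG.
have hdk' : d < k by lia.
set m := INR (k - d + 1).
have hd1 : (1 < INR d)%R by apply: (lt_INR 1); apply/ltP; lia.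
have hdm : (INR d <= m)%R by apply: INR_leq; lia.
have lnd := ln_pos' hd1.
have lnm : (ln (INR d) <= ln m)%R by apply: ln_le'; lra.
set p := (ln m / ln (INR d))%R.
have hp : (1 <= p)%R.
  rewrite /p; apply: (Rmult_le_reg_r (ln (INR d))) => //.
  rewrite Rmult_1_l /Rdiv Rmult_assoc Rinv_l; lra.
have hm : Rpower (INR d) p = INR (k - d + 1).
  rewrite /Rpower /p (_ : ln m / ln (INR d) * ln (INR d) = ln m)%R.
    rewrite exp_ln //; lra.
  by field; lra.
have M := main hd hdk' hp hm hG.
case: (posnP #|Gprime d G|) => h0.
  left; split => //.
  rewrite h0 /= pw0 in M.
  have := pos_INR #|Gsecond d G|; move=> h.
  have : INR #|Gsecond d G| = 0%R by apply: Rle_antisym.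
  by rewrite -[0%R]/(INR 0) => /INR_eq.
right.
have hGn : 0 < #|G|.
  apply: leq_trans h0 _; apply: subset_leq_card; apply/subsetP=> w.
  by rewrite inE => /andP[].
have hS : 0 < #|Gsecond d G|.
  move: hGn; rewrite !card_gt0 => /set0Pn[g gG]; apply/set0Pn; exists (fword d g).
  by apply: imset_f.
have hSr : (0 < INR #|Gsecond d G|)%R by apply: (lt_INR 0); apply/ltP.
have hPr : (0 < INR #|Gprime d G|)%R by apply: (lt_INR 0); apply/ltP.
rewrite pw_pos // in M.
have := ln_le' hSr M; rewrite ln_Rpower => hl.
rewrite /logb -/m.
apply: (Rmult_le_reg_r (ln m)); first lra.
rewrite /Rdiv Rmult_assoc Rinv_l; last lra.
move: hl; rewrite /p; set a := ln (INR _); set b := ln (INR _).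
move=> hl.
lra.
Qed.
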